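(* Let $P_0(k)=C_{p0}T_{p0}^k-C_mT_m^k$ be a low pair function (so $C_{p0},C_m>0$ and $0<T_{p0}<T_m<1$), and let $C_{pi}>0$ and $0<T_{pi}<T_m$, $i=1,\dots,N$. Then there exist $j\in\{0,1,2\}$ and positive numbers $C_{m0},\dots,C_{mN}$ with $\sum_{i=0}^N C_{mi}=C_m$ such that the low pair functions $L_i(k)=C_{pi}T_{pi}^k-C_{mi}T_m^k$, $i=0,\dots,N$, all have their $j$-th derivatives vanishing at a common point (i.e. are synchronized at a common characteristic point), and $$P_0(k)+\sum_{i=1}^N C_{pi}T_{pi}^k=\sum_{i=0}^N L_i(k).$$
   Context: A low pair function is $C_pT_p^k-C_mT_m^k$ with $C_p,C_m>0$ and $0<T_p<T_m<1$, real variable $k$. Its characteristic points are the zeros of the function (abscissa intersection), of its first derivative (minimum) and of its second derivative (inflection point). *)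

(* Defs.v *)
From Stdlib Require Import Reals.
From Coquelicot Require Import Coquelicot.
Open Scope R_scope.

Definition low_pair (Cp Tp Cm Tm : R) (k : R) : R :=
  Cp * Rpower Tp k - Cm * Rpower Tm k.

(* Main.v *)
Require Import Defs.
From Stdlib Require Import Reals Lra Lia FunctionalExtensionality.
From Coquelicot Require Import Coquelicot.
Open Scope R_scope.
Ltac fixeq := match goal with |- ?x = ?y => change (@eq R x y) end.

Lemma sumS (a : nat -> R) n : sum_n a (S n) = sum_n a n + a (S n).
Proof. rewrite sum_Sn. reflexivity. Qed.
Lemma sum0 (a : nat -> R) : sum_n a 0 = a 0%nat.
Proof. apply sum_O. Qed.

Lemma sum_ext_le (a b : nat -> R) n :
  (forall i, (i <= n)%nat -> a i = b i) -> sum_n a n = sum_n b n.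
Proof.
  induction n; intros H. rewrite !sum0; apply H; lia.
  rewrite !sumS, IHn, H; auto.
Qed.

Lemma sum_minus (a b : nat -> R) n :
  sum_n (fun i => a i - b i) n = sum_n a n - sum_n b n.
Proof. induction n; fixeq. rewrite !sum0; ring. rewrite !sumS, IHn; ring. Qed.

Lemma sum_scal (a : nat -> R) c n :
  sum_n (fun i => a i * c) n = sum_n a n * c.
Proof. induction n; fixeq. rewrite !sum0; ring. rewrite !sumS, IHn; ring. Qed.

Lemma sum_split0 (a : nat -> R) N : sum_n a N = a 0%nat + sum_n_m a 1 N.
Proof.
  unfold sum_n. rewrite sum_Sn_m by lia. reflexivity.
Qed.

Lemma sum_ge0 (a : nat -> R) n :
  (forall i, (i <= n)%nat -> 0 <= a i) -> a 0%nat <= sum_n a n.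
Proof.
  induction n; intros H. rewrite sum0; lra.
  rewrite sumS. assert (0 <= a (S n)) by (apply H; lia).
  assert (a 0%nat <= sum_n a n) by (apply IHn; intros; apply H; lia). lra.
Qed.

Lemma sum_cont (F : nat -> R -> R) n :
  (forall i, continuity (F i)) -> continuity (fun k => sum_n (fun i => F i k) n).
Proof.
  intros H. induction n.
  - replace (fun k => sum_n (fun i => F i k) 0) with (F 0%nat). apply H.
    apply functional_extensionality; intro; symmetry; apply sum0.
  - replace (fun k => sum_n (fun i => F i k) (S n)) with
      (fun k => sum_n (fun i => F i k) n + F (S n) k).
    apply continuity_plus; auto.
    apply functional_extensionality; intro; symmetry; apply sumS.
Qed.

Lemma term_small c a eps : 0 < c -> a < 0 -> 0 < eps ->
  exists K, forall k, K <= k -> c * exp (k * a) < eps.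
Proof.
  intros Hc Ha He. exists (c / (eps * - a)). intros k Hk.
  assert (HK : 0 < c / (eps * - a)).
  { apply Rdiv_lt_0_compat; nra. }
  assert (Hka : c / eps <= - (k * a)).
  { assert (c / eps = c / (eps * - a) * - a) by (field; lra). nra. }
  pose proof (exp_ineq1_le (- (k*a))).
  assert (HE : exp (k*a) * exp (-(k*a)) = 1) by (rewrite <- exp_plus; replace (k*a + - (k*a)) with 0 by ring; apply exp_0).
  assert (c < eps * exp (-(k*a))).
  { assert (c = eps * (c/eps)) by (field; lra). nra. }
  pose proof (exp_pos (k*a)). pose proof (exp_pos (-(k*a))). nra.
Qed.

Lemma sum_small (c a : nat -> R) n : (forall i, (i <= n)%nat -> 0 < c i /\ a i < 0) ->
  forall eps, 0 < eps -> exists K, forall k, K <= k ->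
   sum_n (fun i => c i * exp (k * a i)) n < eps.
Proof.
  induction n; intros H eps He.
  - destruct (H 0%nat (le_n _)) as [H1 H2].
    destruct (term_small _ _ _ H1 H2 He) as [K HK]. exists K; intros; rewrite sum0; auto.
  - destruct (IHn (fun i Hi => H i (le_S _ _ Hi)) (eps/2)) as [K1 HK1]; [lra|].
    destruct (H (S n) (le_n _)) as [H1 H2].
    destruct (term_small _ _ (eps/2) H1 H2) as [K2 HK2]; [lra|].
    exists (Rmax K1 K2); intros k Hk. rewrite sumS.
    pose proof (HK1 k (Rle_trans _ _ _ (Rmax_l _ _) Hk)).
    pose proof (HK2 k (Rle_trans _ _ _ (Rmax_r _ _) Hk)). lra.
Qed.

Theorem lemma5 (N : nat) (Cp Tp : nat -> R) (Cm Tm : R) :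
  0 < Cp 0%nat -> 0 < Cm -> 0 < Tp 0%nat -> Tp 0%nat < Tm -> Tm < 1 ->
  (forall i : nat, (1 <= i <= N)%nat -> 0 < Cp i /\ 0 < Tp i /\ Tp i < Tm) ->
  exists j : nat, (j <= 2)%nat /\
  exists Cmi : nat -> R,
    (forall i : nat, (i <= N)%nat -> 0 < Cmi i) /\
    sum_n Cmi N = Cm /\
    (exists k0 : R, forall i : nat, (i <= N)%nat ->
        Derive_n (low_pair (Cp i) (Tp i) (Cmi i) Tm) j k0 = 0) /\
    (forall k : R,
        low_pair (Cp 0%nat) (Tp 0%nat) Cm Tm k
          + sum_n_m (fun i => Cp i * Rpower (Tp i) k) 1 N
        = sum_n (fun i => low_pair (Cp i) (Tp i) (Cmi i) Tm k) N).
Proof.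
  intros HC0 HCm HT0 HT0m HTm H.
  assert (HTm0 : 0 < Tm) by lra.
  assert (HA : forall i, (i <= N)%nat -> 0 < Cp i /\ 0 < Tp i /\ Tp i < Tm).
  { intros [|i] Hi. auto. apply H; lia. }
  set (a := fun i => ln (Tp i / Tm)).
  assert (Ha : forall i, (i <= N)%nat -> 0 < Cp i /\ a i < 0).
  { intros i Hi. destruct (HA i Hi) as (h1 & h2 & h3). split; auto.
    unfold a. rewrite <- ln_1. apply ln_increasing.
    apply Rdiv_lt_0_compat; lra. apply Rmult_lt_reg_r with Tm; auto.
    unfold Rdiv; rewrite Rmult_assoc, Rinv_l; lra. }
  set (g := fun k => sum_n (fun i => Cp i * exp (k * a i)) N).
  destruct (sum_small Cp a N Ha Cm HCm) as [K HK].
  destruct (Ha 0%nat ltac:(lia)) as [_ Ha0].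
  set (klo := - (Cm / Cp 0%nat) / - a 0%nat).
  assert (Hklo : Cm < g klo).
  { unfold g. eapply Rlt_le_trans; [| apply (sum_ge0 (fun i => Cp i * exp (klo * a i)))].
    - pose proof (exp_ineq1_le (klo * a 0%nat)).
      assert (klo * a 0%nat = Cm / Cp 0%nat) by (unfold klo; field; lra).
      assert (Cm = Cp 0%nat * (Cm / Cp 0%nat)) by (field; lra). nra.
    - intros i Hi. destruct (Ha i Hi). pose proof (exp_pos (klo * a i)). nra. }
  assert (Hlo : klo < 0).
  { unfold klo. unfold Rdiv. assert (0 < Cm * / Cp 0%nat) by (apply Rmult_lt_0_compat; auto; apply Rinv_0_lt_compat; auto).
    assert (0 < / - a 0%nat) by (apply Rinv_0_lt_compat; lra). nra. }
  set (khi := Rmax K 1).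
  assert (Hkhi : g khi < Cm) by (apply HK; apply Rmax_l).
  assert (Hlt : klo < khi) by (pose proof (Rmax_r K 1); unfold khi in *; lra).
  assert (Hcont : continuity (fun k => g k - Cm)).
  { apply continuity_minus; [|apply continuity_const; intros ? ?; auto].
    unfold g. apply sum_cont. intros i.
    apply continuity_mult. apply continuity_const; intros ? ?; auto.
    apply (continuity_comp (fun k => k * a i) exp).
    apply continuity_mult. apply derivable_continuous, derivable_id.
    apply continuity_const; intros ? ?; auto.
    apply derivable_continuous, derivable_exp. }
  destruct (IVT (fun k => - (g k - Cm)) klo khi) as (k0 & _ & Hk0).
  { apply continuity_opp; auto. } auto. lra. lra.
  assert (Hg : g k0 = Cm) by lra.
  exists 0%nat. split; [lia|].
  exists (fun i => Cp i * exp (k0 * a i)).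
  assert (Hpow : forall i, (i <= N)%nat -> forall k,
    exp (k * a i) * Rpower Tm k = Rpower (Tp i) k).
  { intros i Hi k. destruct (HA i Hi) as (h1 & h2 & h3). unfold Rpower, a.
    rewrite <- exp_plus. rewrite ln_div by lra. f_equal. ring. }
  split; [|split; [|split]].
  - intros i Hi. destruct (Ha i Hi). pose proof (exp_pos (k0 * a i)). nra.
  - exact Hg.
  - exists k0. intros i Hi. simpl. unfold low_pair.
    rewrite Rmult_assoc, Hpow by auto. ring.
  - intros k. unfold low_pair.
    rewrite sum_minus, (sum_split0 (fun i => Cp i * Rpower (Tp i) k)).
    replace (sum_n (fun i => Cp i * exp (k0 * a i) * Rpower Tm k) N)
      with (sum_n (fun i => Cp i * exp (k0 * a i)) N * Rpower Tm k)
      by (rewrite <- sum_scal; reflexivity).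
    unfold g in Hg. rewrite Hg. fixeq. ring.
Qed.
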